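(* For every odd integer $n\ge 7$, $$g_{odd}(\mathrm{Pet}(n,3))=\begin{cases}\frac{n}{3} & \text{if } 3\mid n,\\[2pt] \frac{n+8}{3} & \text{if } n\equiv 1\pmod 3,\\[2pt] \frac{n+10}{3} & \text{if } n\equiv 2\pmod 3.\end{cases}$$
   Context: For integers $n,k$ with $2<2k\le n$, the generalized Petersen graph $\mathrm{Pet}(n,k)$ has vertex set $\{u_0,\dots,u_{n-1}\}\cup\{v_0,\dots,v_{n-1}\}$ and edge set $\{u_iu_{i+1}\}\cup\{u_iv_i\}\cup\{v_iv_{i+k}\}$, indices modulo $n$. $g_{odd}(G)$ denotes the length of a shortest odd cycle of $G$. *)

(* Defs.v *)
From mathcomp Require Import all_boot.
Set Implicit Arguments. Unset Strict Implicit. Unset Printing Implicit Defensive.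

(* Vertices of Pet(n,k): (false, i) = u_i, (true, i) = v_i, i : 'I_n. *)
Definition petV (n : nat) : finType := (bool * 'I_n)%type.

Definition pet_adj (n k : nat) : rel (petV n) :=
  fun x y =>
    match x, y with
    | (false, i), (false, j) =>
        (val j == (val i + 1) %% n) || (val i == (val j + 1) %% n)
    | (false, i), (true, j) => val i == val j
    | (true, i), (false, j) => val i == val j
    | (true, i), (true, j) =>
        (val j == (val i + k) %% n) || (val i == (val j + k) %% n)
    end.

Arguments pet_adj n k : clear implicits.

Definition is_graph_cycle (T : finType) (e : rel T) (c : seq T) : Prop :=
  [/\ 3 <= size c, cycle e c & uniq c].

Definition is_odd_girth (T : finType) (e : rel T) (g : nat) : Prop :=
  (exists c, [/\ is_graph_cycle e c, odd (size c) & size c = g]) /\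
  (forall c, is_graph_cycle e c -> odd (size c) -> g <= size c).

(* Main.v *)
Require Import Defs.
From mathcomp Require Import all_boot zify.
Set Implicit Arguments. Unset Strict Implicit.


Definition ekind n (x y : petV n) : nat :=
  match x, y with
  | (false, i), (false, j) => if val j == (val i + 1) %% n then 0 else 1
  | (true, i), (true, j) => if val j == (val i + 3) %% n then 3 else 4
  | _, _ => 2
  end.

Fixpoint kc n (k : nat) (x : petV n) (p : seq (petV n)) : nat :=
  match p with [::] => 0 | y :: q => (ekind x y == k) + kc k y q end.

Lemma kc_size n (x : petV n) p :
  size p = kc 0 x p + kc 1 x p + kc 2 x p + kc 3 x p + kc 4 x p.
Proof.
elim: p x => [//|y q IH] x /=; rewrite (IH y).
by case: x => [[] i]; case: y => [[] j] /=; try case: ifP => _ /=; lia.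
Qed.

Lemma kc_odd n (x : petV n) p : odd (kc 2 x p) = (x.1 != (last x p).1).
Proof.
elim: p x => [|y q IH] x /=; first by case: x => [[] i].
rewrite oddD IH.
by case: x => [[] i]; case: y => [[] j] /=; try case: ifP => _ /=;
  case: (last _ q) => [[] ?].
Qed.

Lemma kc_same n (x : petV n) p : kc 2 x p = 0 ->
  if x.1 then kc 0 x p + kc 1 x p = 0 else kc 3 x p + kc 4 x p = 0.
Proof.
elim: p x => [|y q IH] x /=; first by case: x => [[] i].
case: x => [[] i]; case: y => [[] j] /=; try case: ifP => _ /=;
  move=> h; rewrite ?add0n in h *; first [lia | move: (IH _ h) => /=; lia].
Qed.

Lemma modDr_eq n a b c : a %% n = b %% n -> (a + c) %% n = (b + c) %% n.
Proof. by move=> h; rewrite -modnDml h modnDml. Qed.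

Lemma kc_mod n (x : petV n) p : path (pet_adj n 3) x p ->
  (val x.2 + kc 0 x p + 3 * kc 3 x p) %% n =
  (val (last x p).2 + kc 1 x p + 3 * kc 4 x p) %% n.
Proof.
elim: p x => [|y q IH] x /=; first by [].
move=> /andP[hxy hp]; move: (IH y hp) => {IH}.
case: x hxy => [[] i]; case: y hp => [[] j] hp /= hxy.
- case: ifP => [/eqP hj|hj] /= IH; rewrite ?add0n ?addn0.
  + have -> : 3 * (1 + kc 3 (true, j) q) = 3 + 3 * kc 3 (true, j) q by lia.
    have -> : i + kc 0 (true, j) q + (3 + 3 * kc 3 (true, j) q) =
      (i + 3) + (kc 0 (true, j) q + 3 * kc 3 (true, j) q) by lia.
    by rewrite -modnDml -hj addnA IH.
  + move: hxy; rewrite hj /= => /eqP hi.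
    have -> : val (last (true, j) q).2 + kc 1 (true, j) q + 3 * (1 + kc 4 (true, j) q) =
      (val (last (true, j) q).2 + kc 1 (true, j) q + 3 * kc 4 (true, j) q) + 3 by lia.
    rewrite -(modDr_eq _ IH) hi -!addnA modnDml; congr (_ %% _); lia.
- move=> IH; rewrite (eqP hxy); move: IH; rewrite !add0n; by [].
- move=> IH; rewrite (eqP hxy); move: IH; rewrite !add0n; by [].
- case: ifP => [/eqP hj|hj] /= IH; rewrite ?add0n ?addn0.
  + have -> : i + (1 + kc 0 (false, j) q) + 3 * kc 3 (false, j) q =
      (i + 1) + (kc 0 (false, j) q + 3 * kc 3 (false, j) q) by lia.
    by rewrite -modnDml -hj addnA IH.
  + move: hxy; rewrite hj /= => /eqP hi.
    have -> : val (last (false, j) q).2 + (1 + kc 1 (false, j) q) + 3 * kc 4 (false, j) q =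
      (val (last (false, j) q).2 + kc 1 (false, j) q + 3 * kc 4 (false, j) q) + 1 by lia.
    rewrite -(modDr_eq _ IH) hi -!addnA modnDml; congr (_ %% _); lia.
Qed.

Lemma modgap n X Y : X %% n = Y %% n -> X != Y -> Y + n <= X \/ X + n <= Y.
Proof.
move=> h hne; case: (leqP Y X) => hYX.
- left; have : n %| X - Y by rewrite -eqn_mod_dvd // h.
  move=> /dvdn_leq; have : 0 < X - Y by move: hne; lia.
  move=> hp /(_ hp); lia.
- right; have : n %| Y - X by rewrite -eqn_mod_dvd ?h // ltnW.
  move=> /dvdn_leq; have : 0 < Y - X by lia.
  move=> hp /(_ hp); lia.
Qed.

Lemma gval n : (if n %% 3 == 0 then n %/ 3
     else if n %% 3 == 1 then (n + 8) %/ 3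
     else (n + 10) %/ 3) =
  (if n %% 3 == 0 then n %/ 3 else if n %% 3 == 1 then n %/ 3 + 3 else n %/ 3 + 4).
Proof.
case: ifP => /eqP h0 //; case: ifP => /eqP h1; lia.
Qed.

Lemma arith n a0 a1 a2 a3 a4 : odd n -> 7 <= n ->
  odd (a0+a1+a2+a3+a4) -> ~~ odd a2 -> (a2 = 0 -> a0 + a1 = 0 \/ a3 + a4 = 0) ->
  (a0 + 3*a3) %% n = (a1 + 3*a4) %% n ->
  (if n %% 3 == 0 then n %/ 3
     else if n %% 3 == 1 then (n + 8) %/ 3
     else (n + 10) %/ 3) <= a0+a1+a2+a3+a4.
Proof.
move=> hn h7 hL ha2 hsame hm.
rewrite gval.
have hdq := divn_eq n 3; have hr := ltn_pmod n (isT : 0 < 3).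
move: hdq hr; set q := n %/ 3; set r := n %% 3 => hdq hr.
have hne : a0 + 3 * a3 != a1 + 3 * a4.
  apply/eqP => e; move: hL ha2; clear -e; lia.
have hg := modgap hm hne.
case: (boolP (r == 0)) => h3.
- move/eqP: h3 => h3; case: hg => hg; clear -hg hdq h3; lia.
case: (posnP (a0 + a1)) => hA.
- have ha0 : a0 = 0 by clear -hA; lia. have ha1 : a1 = 0 by clear -hA; lia.
  move: hm; rewrite ha0 ha1 !add0n => hm.
  have cop : coprime n 3.
    by rewrite coprime_sym prime_coprime // /dvdn -/r.
  have hm' : a3 %% n = a4 %% n.
    case: (leqP a4 a3) => h43.
    + have : n %| 3 * a3 - 3 * a4 by rewrite -eqn_mod_dvd ?leq_mul2l ?h43 ?orbT // hm.
      rewrite -mulnBr (Gauss_dvdr _ cop) => hd.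
      by apply/eqP; rewrite eqn_mod_dvd.
    + have : n %| 3 * a4 - 3 * a3 by rewrite -eqn_mod_dvd ?leq_mul2l ?(ltnW h43) ?orbT // hm.
      rewrite -mulnBr (Gauss_dvdr _ cop) => hd.
      by apply/esym/eqP; rewrite eqn_mod_dvd // ltnW.
  have hne' : a3 != a4 by apply/eqP => e; move: hne; rewrite ha0 ha1 e eqxx.
  have := modgap hm' hne'; clear hm hm' hne hne' cop.
  rewrite ?(negbTE h3); case: ifP => /eqP h1 hg'; case: hg' => hg'; clear -hg' hdq hr h3 h1 h7; lia.
case: (posnP (a3 + a4)) => hC.
- rewrite ?(negbTE h3); case: ifP => /eqP h1; case: hg => hg; clear -hg hC hdq hr h3 h1 h7; lia.
have ha2p : 2 <= a2.
  clear hm hne; case: (posnP a2) => h; first by case: (hsame h); clear -hA hC; lia.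
  clear -ha2 h; lia.
rewrite ?(negbTE h3); case: ifP => /eqP h1; case: hg => hg; clear -hg hA ha2p hdq hr h3 h1; lia.
Qed.
Lemma path_succ (T : Type) (e : rel T) (f : nat -> T) m k :
  (forall i, m <= i -> i < m + k -> e (f i) (f i.+1)) ->
  path e (f m) (map f (iota m.+1 k)).
Proof.
elim: k m => [//|k IH] m h /=.
rewrite h ?leqnn ?addnS ?ltnS ?leq_addr //=.
apply: IH => i h1 h2; apply: h; lia.
Qed.

Lemma last_iota m k : last m (iota m.+1 k) = m + k.
Proof. elim: k m => [|k IH] m /=; first by rewrite addn0. by rewrite IH addnS. Qed.

Section Up.
Variable n' : nat.
Local Notation n := n'.+1.
Local Notation e := (pet_adj n 3).

Definition Fv (i : nat) : petV n := (false, inord i).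
Definition Gv (r i : nat) : petV n := (true, inord ((r + 3 * i) %% n)).

Lemma valG r i : val (Gv r i).2 = (r + 3 * i) %% n.
Proof. by rewrite /= inordK // ltn_pmod. Qed.

Lemma adjG r i : e (Gv r i) (Gv r i.+1).
Proof.
rewrite /= !inordK ?ltn_pmod //; apply/orP; left; apply/eqP.
rewrite modnDml; congr (_ %% _); lia.
Qed.

Lemma adjF i : i.+1 < n -> e (Fv i) (Fv i.+1).
Proof.
move=> h; rewrite /= !inordK ?(ltnW h) //; apply/orP; left; apply/eqP.
by rewrite addn1 modn_small.
Qed.

Lemma Ginj r i j : r + 3 * i <= n -> r + 3 * j <= n -> 0 < r + 3 * i -> 0 < r + 3 * j ->
  Gv r i = Gv r j -> i = j.
Proof.
move=> hi hj hi0 hj0 [] /(congr1 (@nat_of_ord n)); rewrite !inordK ?ltn_pmod //.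
case: (ltnP (r + 3 * i) n) => hi'; case: (ltnP (r + 3 * j) n) => hj'.
- rewrite !modn_small //; lia.
- have -> : r + 3 * j = n by lia. rewrite modnn modn_small //; lia.
- have -> : r + 3 * i = n by lia. rewrite modnn modn_small //; lia.
- lia.
Qed.

Lemma Ginj_lt r i j : r + 3 * i < n -> r + 3 * j < n -> Gv r i = Gv r j -> i = j.
Proof.
move=> hi hj [] /(congr1 (@nat_of_ord n)); rewrite !inordK ?ltn_pmod // !modn_small //; lia.
Qed.

Lemma wit0 m : n = 3 * m -> 3 <= m ->
  is_graph_cycle e (map (Gv 0) (iota 0 m)).
Proof.
move=> hn hm; split; first by rewrite size_map size_iota.
- case: m hn hm => [//|m] hn hm.
  rewrite /= rcons_path; apply/andP; split.
    by apply: (path_succ (f := Gv 0)) => i _ _; apply: adjG.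
  rewrite last_map last_iota add0n.
  have -> : Gv 0 0 = Gv 0 m.+1.
    by rewrite /Gv; congr (_, inord _); rewrite hn modnn.
  exact: adjG.
- rewrite map_inj_in_uniq ?iota_uniq // => i j; rewrite !mem_iota => hi hj.
  apply: Ginj_lt; lia.
Qed.

Lemma wit12 r q : n = r + 3 * q -> 1 <= r <= 2 -> 1 <= q ->
  is_graph_cycle e (map Fv (iota 0 r.+1) ++ map (Gv r) (iota 0 q.+1)).
Proof.
move=> hn hr hq; split; first by rewrite size_cat !size_map !size_iota; lia.
- rewrite [iota 0 r.+1]/= [map _ (_ :: _)]/= cat_cons /= rcons_cat cat_path.
  apply/andP; split.
    by apply: (path_succ (f := Fv)) => i _ hi; apply: adjF; lia.
  rewrite last_map last_iota add0n.
  rewrite rcons_cons /= rcons_path; apply/and3P; split.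
  + by rewrite !inordK ?ltn_pmod ?addn0 ?modn_small //; lia.
  + by apply: (path_succ (f := Gv r)) => i _ _; apply: adjG.
  + by rewrite last_map last_iota add0n /= -hn modnn.
- rewrite cat_uniq; apply/and3P; split.
  + rewrite map_inj_in_uniq ?iota_uniq // => i j; rewrite !mem_iota => hi hj.
    move=> [] /(congr1 (@nat_of_ord n)); rewrite !inordK //; lia.
  + apply/hasPn => y /mapP [i _ ->]; apply/negP => /mapP [j _ [] //].
  + rewrite map_inj_in_uniq ?iota_uniq // => i j; rewrite !mem_iota => hi hj.
    apply: Ginj; lia.
Qed.

End Up.

Lemma lower n c : odd n -> 7 <= n -> is_graph_cycle (pet_adj n 3) c -> odd (size c) ->
  (if n %% 3 == 0 then n %/ 3
     else if n %% 3 == 1 then (n + 8) %/ 3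
     else (n + 10) %/ 3) <= size c.
Proof.
move=> hn h7 [hs hc hu] ho.
case: c hs hc hu ho => [//|x p] hs hc hu ho.
have hp : path (pet_adj n 3) x (rcons p x) by [].
have hsz : size (x :: p) = size (rcons p x) by rewrite size_rcons.
rewrite hsz (kc_size x (rcons p x)) in ho *.
apply: arith => //.
- by rewrite kc_odd last_rcons eqxx.
- by move=> h0; have := kc_same h0; case: (x.1) => h; [left|right].
- have := kc_mod hp; rewrite last_rcons -!addnA.
  by move=> /eqP; rewrite eqn_modDl => /eqP.
Qed.

Unset Implicit Arguments.

Theorem mainTheorem20 (n : nat) :
  odd n -> 7 <= n ->
  is_odd_girth (pet_adj n 3)
    (if n %% 3 == 0 then n %/ 3
     else if n %% 3 == 1 then (n + 8) %/ 3
     else (n + 10) %/ 3).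
Proof.
move=> hn h7; split; last by move=> c hc hoc; apply: lower.
case: n hn h7 => [//|n'] hn h7.
have hdq := divn_eq n'.+1 3; have hr := ltn_pmod n'.+1 (isT : 0 < 3).
move: hdq hr; set q := n'.+1 %/ 3; set r := n'.+1 %% 3 => hdq hr.
case: (ltnP r 1) => hr0.
- have r0 : r = 0 by lia.
  exists (map (Gv n' 0) (iota 0 q)); split.
  + apply: wit0; lia.
  + rewrite size_map size_iota; lia.
  + by rewrite r0 size_map size_iota.
- exists (map (Fv n') (iota 0 r.+1) ++ map (Gv n' r) (iota 0 q.+1)); split.
  + apply: wit12; lia.
  + rewrite size_cat !size_map !size_iota; lia.
  + rewrite size_cat !size_map !size_iota.
    have -> : (r == 0) = false by apply/eqP; lia.
    case: ifP => /eqP h1; lia.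
Qed.
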